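(* Let $q, k \in \mathbb{N}$ with $1 < q < \frac{k}{4}$. Let $D_1, \dots, D_q \in \mathbb{N}$ satisfy $$D_q(k - 4q) > 1 + \xi q(q-1) + 5\binom{k-q}{2}, \qquad \text{where } \xi = \max_{1 \leq j < q}\{D_j - D_{j+1}\}.$$ If there exists an $(a_1, \dots, a_q)$-flip graph $F$ (with a witnessing colouring) such that $e_j^F[v] = D_j$ for every $v \in V(F)$ and every $1 \leq j \leq q$, then for every $N \in \mathbb{N}$ there exists an $(a_1, \dots, a_k)$-flip graph for some $a_{q+1}, \dots, a_k \in \mathbb{N}$ with $a_k > N$.
   Context: For a graph $G$ with an edge-colouring $f\colon E(G)\to\{1,\dots,k\}$ and $1\le j\le k$: $e^G_j[v]$ is the number of edges coloured $j$ in the subgraph of $G$ induced by the closed neighbourhood $N[v]$ of $v$, and $\deg_j(v)$ is the number of edges coloured $j$ incident to $v$. Given a strictly increasing sequence of positive integers $(a_1,\dots,a_k)$, a $d$-regular graph $G$ with $d=\sum_j a_j$ is an $(a_1,\dots,a_k)$-flip graph if there is an edge-colouring with colours $\{1,\dots,k\}$ such that $\deg_j(v)=a_j$ for all vertices $v$ and all $j$, and $e_k[v]<e_{k-1}[v]<\dots<e_1[v]$ for every vertex $v$. *)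

(* Defs.v *)
From mathcomp Require Import all_boot.
Set Implicit Arguments. Unset Strict Implicit. Unset Printing Implicit Defensive.

(* An edge-colouring is c : T -> T -> nat, required (on edges) to be
   symmetric with values in {1,...,k}.  Colours/indices are 1-based. *)

Definition simple_graph (T : finType) (e : rel T) : Prop :=
  symmetric e /\ irreflexive e.

Definition cnbhd (T : finType) (e : rel T) (v : T) : {set T} :=
  [set u | (u == v) || e v u].

Definition degj (T : finType) (e : rel T) (c : T -> T -> nat) (j : nat) (v : T) : nat :=
  #|[set u | e v u && (c v u == j)]|.

(* e_j[v]: number of edges coloured j in the subgraph induced by N[v];
   edges are counted as 2-element vertex sets {x,y}. *)
Definition ej (T : finType) (e : rel T) (c : T -> T -> nat) (j : nat) (v : T) : nat :=
  #|[set E : {set T} | (E \subset cnbhd e v) &&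
       [exists x, exists y, [&& E == [set x; y], e x y & c x y == j]]]|.

Definition flip_seq (k : nat) (a : nat -> nat) : Prop :=
  (forall j, 1 <= j <= k -> 0 < a j) /\ (forall j, 1 <= j < k -> a j < a j.+1).

Definition flip_colouring (T : finType) (e : rel T) (k : nat) (a : nat -> nat)
    (c : T -> T -> nat) : Prop :=
  [/\ forall x y, e x y -> c x y = c y x /\ 1 <= c x y <= k,
      forall v j, 1 <= j <= k -> degj e c j v = a j
    & forall v j, 1 <= j < k -> ej e c j.+1 v < ej e c j v].

Definition flip_graph_with (T : finType) (e : rel T) (k : nat) (a : nat -> nat)
    (c : T -> T -> nat) : Prop :=
  [/\ flip_seq k a, simple_graph e, 0 < #|T|,
      forall v, #|[set u | e v u]| = \sum_(1 <= j < k.+1) a j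
    & flip_colouring e k a c].

Definition flip_graph (T : finType) (e : rel T) (k : nat) (a : nat -> nat) : Prop :=
  exists c, flip_graph_with e k a c.

(* Main.v *)
Require Import Defs.
From mathcomp Require Import all_boot zify.
Set Implicit Arguments. Unset Strict Implicit. Unset Printing Implicit Defensive.

Lemma card_sumE (T : finType) (P : pred T) : #|[set x | P x]| = \sum_x (P x : nat).
Proof.
rewrite cardsE -sum1_card big_mkcond /=; apply: eq_bigr => x _.
by rewrite unfold_in; case: (P x).
Qed.

Lemma sum_eq_range m n x : \sum_(m <= j < n) ((x == j) : nat) = (m <= x < n).
Proof.
elim: n => [|n IH]; first by rewrite big_geq // ltn0 andbF.
case: (leqP m n) => Hmn.
  rewrite big_nat_recr //= IH.
  case: eqVneq => [->|H]; first by rewrite ltnn Hmn ltnSn andbF andbT.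
  rewrite addn0; congr (nat_of_bool (_ && _)).
  by rewrite ltnS ltn_neqAle H.
rewrite big_geq; last by lia.
by case: (leqP m x) => //=; lia.
Qed.

Lemma sum_partition (I : finType) (P : pred I) (col : I -> nat) n :
  (forall i, P i -> 1 <= col i <= n) ->
  \sum_i (P i : nat) = \sum_(1 <= j < n.+1) \sum_i ((P i && (col i == j)) : nat).
Proof.
move=> H; rewrite exchange_big /=; apply: eq_bigr => i _.
case Pi: (P i) => /=; last by rewrite big1.
by rewrite sum_eq_range; have := H i Pi; lia.
Qed.

Lemma sum_pair (I J : finType) (G : I * J -> nat) :
  \sum_(p : I * J) G p = \sum_(i : I) \sum_(j : J) G (i, j).
Proof. by rewrite pair_bigA; apply: eq_bigr => [[i j]]. Qed.

Lemma sum_constD (D : finType) (n : nat) : \sum_(d : D) n = #|{: D}| * n.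
Proof. by rewrite sum_nat_const. Qed.

Lemma set2_inv (T : finType) (a b x y : T) : a != b ->
  [set a; b] = [set x; y] -> (a == x) && (b == y) || (a == y) && (b == x).
Proof.
move=> ab E.
have ha : a \in [set x; y] by rewrite -E !inE eqxx.
have hb : b \in [set x; y] by rewrite -E !inE eqxx orbT.
have hx : x \in [set a; b] by rewrite E !inE eqxx.
move: ha hb hx; rewrite !inE.
case/orP=> /eqP ha; case/orP=> /eqP hb; subst a b; rewrite ?eqxx ?orbT ?andbT //=.
- by rewrite eqxx in ab.
all: try by rewrite eqxx in ab.
all: by move=> *; rewrite eq_sym.
Qed.

Lemma ej_pairs (T : finType) (e : rel T) (c : T -> T -> nat) j v :
  symmetric e -> irreflexive e -> (forall x y, e x y -> c x y = c y x) ->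
  2 * ej e c j v = \sum_(p : T * T) ((p.1 \in cnbhd e v) && (p.2 \in cnbhd e v)
                          && e p.1 p.2 && (c p.1 p.2 == j) : nat).
Proof.
move=> esym eirr csym.
set S := cnbhd e v.
pose Pp := [set p : T * T | (p.1 \in S) && (p.2 \in S) && e p.1 p.2 && (c p.1 p.2 == j)].
rewrite -(card_sumE (fun p : T * T => (p.1 \in S) && (p.2 \in S) && e p.1 p.2 && (c p.1 p.2 == j))).
rewrite -/Pp.
pose fp := fun p : T * T => [set p.1; p.2].
have EsE : [set E : {set T} | (E \subset S) &&
       [exists x, exists y, [&& E == [set x; y], e x y & c x y == j]]] = fp @: Pp.
  apply/setP => E; rewrite !inE; apply/idP/imsetP.
  - case/andP=> sub /existsP [x /existsP [y /and3P [/eqP Ee exy cxy]]]; subst E.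
    exists (x, y) => //; rewrite /Pp inE /= exy cxy !andbT.
    have xS : x \in S by apply: (subsetP sub); rewrite !inE eqxx.
    have yS : y \in S by apply: (subsetP sub); rewrite !inE eqxx orbT.
    by rewrite xS yS.
  - case=> [[x y]]; rewrite /Pp inE /= => /andP [/andP [/andP [xS yS] exy] cxy] ->.
    apply/andP; split.
      by apply/subsetP => z; rewrite /fp /= in_set2 => /orP [] /eqP ->.
    by apply/existsP; exists x; apply/existsP; exists y; rewrite /fp /= eqxx exy cxy.
rewrite /ej EsE -[#|Pp|]sum1_card (partition_big_imset fp) /= -[#|fp @: Pp|]sum1_card big_distrr /=.
apply: eq_bigr => E /imsetP [[x y] Pxy ->].
move: (Pxy); rewrite /Pp inE /= => /andP [/andP [/andP [xS yS] exy] cxy].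
have xy : x != y by apply: contraTneq exy => ->; rewrite eirr.
rewrite (eq_bigl (mem [set (x, y); (y, x)])); last first.
  move=> [a b]; rewrite !inE /= /fp /=.
  apply/idP/idP.
  - case/andP=> /andP [/andP [/andP [aS bS] eab] cab] /eqP Eab.
    have ab : a != b by apply: contraTneq eab => ->; rewrite eirr.
    by case/orP: (set2_inv ab Eab) => /andP [/eqP -> /eqP ->]; rewrite eqxx ?orbT.
  - move: xS yS; rewrite !inE => xS yS.
    case/orP => /eqP [-> ->]; rewrite xS yS /=.
      by rewrite exy cxy eqxx.
    by rewrite esym exy -csym // cxy setUC eqxx.
rewrite sum1_card cards2 muln1.
by rewrite (_ : (x, y) != (y, x)) //; apply: contra xy => /eqP [->].
Qed.

Section Cons.
Variables (T : finType) (e : rel T) (c : T -> T -> nat) (q K B : nat).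

Local Notation Dl := ('I_K * 'I_B)%type.
Local Notation Hc := {ffun Dl -> bool}.
Definition flp (h : Hc) (d : Dl) : Hc := [ffun d' => (d' == d) (+) h d'].
Definition gcol (t : nat) (d : Dl) : nat :=
  if t == 1 then minn d.1 d.2 else if t == 2 then maxn d.1 (K.-1 - d.2) else d.1.
Definition tau (x y : T) : nat := if x == y then 0 else c x y.
Local Notation Vt := (T * Hc)%type.
Definition Hadj (h h' : Hc) : bool := [exists d, h' == flp h d].
Definition inNH (h h' : Hc) : bool := (h' == h) || Hadj h h'.
Definition Eg (u w : Vt) : bool :=
  ((u.2 == w.2) && e u.1 w.1) || (Hadj u.2 w.2 && ((u.1 == w.1) || e u.1 w.1)).
Definition Cg (u w : Vt) : nat :=
  if u.2 == w.2 then c u.1 w.1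
  else if [pick d | u.2 d != w.2 d] is Some d then q.+1 + gcol (tau u.1 w.1) d else 0.

Lemma flpK (h : Hc) (d : Dl) : flp (flp h d) d = h.
Proof. by apply/ffunP => x; rewrite !ffunE; case: (x == d); case: (h x). Qed.

Lemma flp_neq (h : Hc) (d : Dl) : flp h d != h.
Proof. by apply/eqP => /ffunP /(_ d); rewrite ffunE eqxx; case: (h d). Qed.

Lemma flp_inj (h : Hc) : injective (flp h).
Proof.
move=> d d' /ffunP /(_ d); rewrite !ffunE eqxx.
by case: eqVneq => // _; case: (h d).
Qed.

Lemma Hadj_irr (h : Hc) : Hadj h h = false.
Proof. by apply/existsP => [[d /eqP E]]; move: (flp_neq h d); rewrite -E eqxx. Qed.

Lemma Hadj_flp (h : Hc) (d : Dl) : Hadj h (flp h d).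
Proof. by apply/existsP; exists d. Qed.

Lemma Hadj_sym (h h' : Hc) : Hadj h h' = Hadj h' h.
Proof.
by apply/existsP/existsP => [[d /eqP ->]|[d /eqP ->]]; exists d; rewrite flpK.
Qed.

Lemma pick_flp (h : Hc) (d : Dl) : [pick d' | h d' != flp h d d'] = Some d.
Proof.
case: pickP => [d' |]; last by move/(_ d); rewrite ffunE eqxx; case: (h d).
rewrite ffunE; case: (eqVneq d' d) => [->|] // _; by case: (h d').
Qed.

Lemma Hadj_flp2 (h : Hc) (d d' : Dl) : Hadj (flp h d) (flp h d') = false.
Proof.
apply/existsP => [[d'' /eqP E]].
have E1 := congr1 (fun f : Hc => f d) E.
have E2 := congr1 (fun f : Hc => f d'') E.
have E3 := congr1 (fun f : Hc => f d') E.
move: E1 E2 E3; rewrite /= !ffunE !eqxx.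
case: (eqVneq d d') => [<-|ndd']; case: (eqVneq d d'') => [<-|ndd''];
  rewrite ?eqxx /=; try (case: (h d); by []).
- by move=> _; case: (h d'').
- by rewrite [d' == d]eq_sym (negbTE ndd'); case: (h d').
Qed.


Lemma in_imflp (h h' : Hc) : (h' \in [set flp h d | d : Dl]) = Hadj h h'.
Proof.
apply/imsetP/existsP => [[d _ ->]|[d /eqP ->]]; first by exists d.
by exists d.
Qed.

Lemma sum_NH (h : Hc) (F : Hc -> nat) :
  \sum_(h' : Hc) (inNH h h' : nat) * F h' = F h + \sum_(d : Dl) F (flp h d).
Proof.
pose NH := h |: [set flp h d | d : Dl].
rewrite (eq_bigr (fun h' => if h' \in NH then F h' else 0)); last first.
  by move=> h' _; rewrite /NH !inE in_imflp /inNH; case: (_ || _); rewrite ?mul1n ?mul0n.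
rewrite -big_mkcond /NH big_setU1 /=; last first.
  by apply/imsetP => [[d _ E]]; move: (flp_neq h d); rewrite -E eqxx.
rewrite big_imset /=; last by move=> d d' _ _; apply: flp_inj.
done.
Qed.


Hypotheses (esym : symmetric e) (eirr : irreflexive e)
  (csym : forall x y, e x y -> c x y = c y x)
  (crng : forall x y, e x y -> 1 <= c x y <= q).

Lemma Eg_sym : symmetric Eg.
Proof.
move=> [x h] [y h'] /=; rewrite /Eg /= Hadj_sym esym (eq_sym h) (eq_sym x) //.
Qed.

Lemma Eg_irr : irreflexive Eg.
Proof. by move=> [x h]; rewrite /Eg /= eirr Hadj_irr andbF. Qed.

Lemma tau_sym x y : (x == y) || e x y -> tau x y = tau y x.
Proof.
rewrite /tau eq_sym; case: eqVneq => //= _ exy; exact: csym.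
Qed.

Lemma pick_sym (h h' : Hc) : [pick d | h d != h' d] = [pick d | h' d != h d].
Proof. by apply: eq_pick => d; rewrite /= eq_sym. Qed.

Lemma Cg_sym u w : Eg u w -> Cg u w = Cg w u.
Proof.
case: u w => [x h] [y h']; rewrite /Eg /Cg /= (eq_sym h') pick_sym.
case: eqVneq => [->|nh] /=; first by rewrite Hadj_irr orbF; apply: csym.
move=> /andP [_ H]; case: pickP => // d _; rewrite tau_sym //.
Qed.

Lemma Eg_flp x y (h : Hc) d : Eg (x, h) (y, flp h d) = (x == y) || e x y.
Proof. by rewrite /Eg /= eq_sym (negbTE (flp_neq h d)) Hadj_flp. Qed.

Lemma Cg_flp x y (h : Hc) d : Cg (x, h) (y, flp h d) = q.+1 + gcol (tau x y) d.
Proof. by rewrite /Cg /= eq_sym (negbTE (flp_neq h d)) pick_flp. Qed.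

Lemma Eg_same x y (h : Hc) : Eg (x, h) (y, h) = e x y.
Proof. by rewrite /Eg /= eqxx Hadj_irr /= orbF. Qed.

Lemma Cg_same x y (h : Hc) : Cg (x, h) (y, h) = c x y.
Proof. by rewrite /Cg /= eqxx. Qed.

Lemma Eg_far x y (h h' : Hc) : h != h' -> ~~ Hadj h h' -> Eg (x, h) (y, h') = false.
Proof. by move=> nh na; rewrite /Eg /= (negbTE nh) (negbTE na). Qed.

Lemma cnbhd_Eg (u v : Vt) :
  (u \in cnbhd Eg v) = (u.1 \in cnbhd e v.1) && inNH v.2 u.2.
Proof.
case: u v => [x h'] [f h]; rewrite /cnbhd !inE /inNH /Eg /=.
case: (eqVneq h' h) => [->|nh] /=.
  by rewrite Hadj_irr -pair_eqE /= eqxx andbT andbT orbF.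
rewrite -pair_eqE /= (negbTE nh) andbF /= eq_sym.
by rewrite andbC.
Qed.


Lemma gcol_lt0 t (d : Dl) : 0 < K -> gcol t d < K.
Proof.
move=> K0; rewrite /gcol; case: d => [a b] /=.
have := ltn_ord a; case: (t == 1); case: (t == 2); lia.
Qed.

Lemma Cg_rng u w : 0 < K -> Eg u w -> 1 <= Cg u w <= q + K.
Proof.
move=> K0; case: u w => [x h] [y h']; rewrite /Eg /Cg /=.
case: eqVneq => [->|nh] /=; first by rewrite Hadj_irr orbF => H; have := crng H; lia.
case/andP => /existsP [d /eqP ->] _; rewrite pick_flp.
have := gcol_lt0 (tau x y) d K0; lia.
Qed.

Lemma degj_Eg j f (h : Hc) :
  degj Eg Cg j (f, h) = degj e c j f +
    \sum_(d : Dl) \sum_(x : T) (((x == f) || e f x) && (q.+1 + gcol (tau f x) d == j) : nat).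
Proof.
rewrite /degj !card_sumE sum_pair exchange_big /=.
rewrite (eq_bigr (fun h' => (inNH h h' : nat) *
    \sum_x ((Eg (f, h) (x, h') && (Cg (f, h) (x, h') == j)) : nat))); last first.
  move=> h' _; case E: (inNH h h'); rewrite ?mul1n // mul0n big1 // => x _.
  move/negbT: E; rewrite /inNH negb_or eq_sym => /andP [nh na].
  by rewrite Eg_far.
rewrite sum_NH; congr (_ + _).
  by apply: eq_bigr => x _; rewrite Eg_same Cg_same.
apply: eq_bigr => d _; apply: eq_bigr => x _.
by rewrite Eg_flp Cg_flp (eq_sym x).
Qed.


Definition Qc j f := \sum_(p : T * T) ((p.1 \in cnbhd e f) && (p.2 \in cnbhd e f)
   && e p.1 p.2 && (c p.1 p.2 == j) : nat).
Definition Xd j f d := \sum_(p : T * T) ((p.1 \in cnbhd e f) && (p.2 \in cnbhd e f)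
   && ((p.1 == p.2) || e p.1 p.2) && (q.+1 + gcol (tau p.1 p.2) d == j) : nat).
Definition Zs j f h1 h2 := \sum_(p : T * T) ((p.1 \in cnbhd e f) && (p.2 \in cnbhd e f)
   && Eg (p.1, h1) (p.2, h2) && (Cg (p.1, h1) (p.2, h2) == j) : nat).

Lemma Zs_same j f h1 : Zs j f h1 h1 = Qc j f.
Proof. by apply: eq_bigr => p _; rewrite Eg_same Cg_same. Qed.

Lemma Zs_flp j f h1 d : Zs j f h1 (flp h1 d) = Xd j f d.
Proof. by apply: eq_bigr => p _; rewrite Eg_flp Cg_flp. Qed.

Lemma Zs_far j f (h1 h2 : Hc) : h1 != h2 -> ~~ Hadj h1 h2 -> Zs j f h1 h2 = 0.
Proof. by move=> nh na; apply: big1 => p _; rewrite Eg_far // andbF. Qed.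

Lemma ej_Eg j f (h : Hc) :
  2 * ej Eg Cg j (f, h) = (#|{: Dl}|).+1 * Qc j f + 2 * \sum_(d : Dl) Xd j f d.
Proof.
rewrite ej_pairs; [|exact: Eg_sym|exact: Eg_irr|exact: Cg_sym].
have step : forall G : (Vt * Vt) -> nat, \sum_(p : Vt * Vt) G p =
   \sum_(h1 : Hc) \sum_(h2 : Hc) \sum_(x1 : T) \sum_(x2 : T) G ((x1, h1), (x2, h2)).
  move=> G; rewrite sum_pair.
  rewrite (eq_bigr (fun u1 => \sum_(x2 : T) \sum_(h2 : Hc) G (u1, (x2, h2)))); last first.
    by move=> u1 _; rewrite sum_pair.
  rewrite sum_pair exchange_big /=; apply: eq_bigr => h1 _.
  rewrite (eq_bigr (fun x1 => \sum_(h2 : Hc) \sum_(x2 : T) G ((x1, h1), (x2, h2)))); last first.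
    by move=> x1 _; rewrite exchange_big.
  by rewrite exchange_big.
rewrite step.
rewrite (eq_bigr (fun h1 => (inNH h h1 : nat) * \sum_(h2 : Hc) (inNH h h2 : nat) * Zs j (f, h).1 h1 h2)); last first.
  move=> h1 _; rewrite big_distrr /=; apply: eq_bigr => h2 _.
  rewrite /Zs sum_pair mulnA big_distrr /=; apply: eq_bigr => x1 _.
  rewrite big_distrr /=; apply: eq_bigr => x2 _ /=.
  rewrite !cnbhd_Eg /=.
  by case: (inNH h h1); case: (inNH h h2); rewrite ?andbF ?andbT //= ?mul1n ?mul0n.
have E1 : forall d, Zs j f (flp h d) h = Xd j f d.
  by move=> d; rewrite -{2}[h](flpK h d) Zs_flp.
have E2 : forall d, \sum_(d' : Dl) Zs j f (flp h d) (flp h d') = Qc j f.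
  move=> d; rewrite (bigD1 d) //= Zs_same big1 ?addn0 // => d' nd.
  apply: Zs_far; last by rewrite Hadj_flp2.
  by apply: contra nd => /eqP /flp_inj ->.
have E3 : \sum_(d : Dl) (\sum_(h2 : Hc) (inNH h h2 : nat) * Zs j f (flp h d) h2)
    = \sum_(d : Dl) (Xd j f d + Qc j f).
  by apply: eq_bigr => d _; rewrite sum_NH E1 E2.
rewrite sum_NH /= E3 sum_NH Zs_same.
have E4 : \sum_(d : Dl) Zs j f h (flp h d) = \sum_(d : Dl) Xd j f d.
  by apply: eq_bigr => d _; rewrite Zs_flp.
rewrite E4 big_split /= sum_nat_const.
rewrite -sum_nat_const sum_constD.
have L : forall a b n, a + b + (b + n * a) = n.+1 * a + 2 * b by move=> *; lia.
exact: L.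
Qed.

End Cons.

Lemma sumS1 n m : \sum_(0 <= b < n) (m <= b : nat) = n - m.
Proof.
elim: n => [|n IH]; first by rewrite big_geq.
rewrite big_nat_recr //= IH; lia.
Qed.

Lemma sumS2 n m : \sum_(0 <= b < n) (b == m : nat) = (m < n).
Proof.
rewrite (eq_bigr (fun b => (m == b : nat))) ?sum_eq_range //.
by move=> b _; rewrite eq_sym.
Qed.

Lemma sum_eqa n cc (F : nat -> nat) : cc < n ->
  \sum_(0 <= a < n) (a == cc) * F a = F cc.
Proof.
move=> H; rewrite (eq_bigr (fun a => (a == cc : nat) * F cc)).
  by rewrite -big_distrl /= sumS2 H mul1n.
by move=> a _; case: eqVneq => [->|].
Qed.

Lemma sumS4 n m : \sum_(0 <= b < n) (b < m : nat) = minn m n.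
Proof.
elim: n => [|n IH]; first by rewrite big_geq //; lia.
rewrite big_nat_recr //= IH; lia.
Qed.

Lemma sum_const_nat n m : \sum_(0 <= a < n) m = n * m.
Proof. by rewrite sum_nat_const_nat subn0. Qed.

Definition Gn K t a b := if t == 1 then minn a b else if t == 2 then maxn a (K.-1 - b) else a.

Lemma nfib_id K B t cc : 0 < K -> K <= B -> cc < K ->
  \sum_(d : 'I_K * 'I_B) (@gcol K B t d == cc : nat) + (t == 1) * (2 * cc) + (t == 2) * K.-1
  = B + (t == 1) * K.-1 + (t == 2) * (2 * cc).
Proof.
move=> K0 KB cK.
rewrite sum_pair.
have -> : \sum_(a : 'I_K) \sum_(b : 'I_B) (@gcol K B t (a, b) == cc : nat) =
   \sum_(0 <= a < K) \sum_(0 <= b < B) (Gn K t a b == cc : nat).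
  symmetry; rewrite big_mkord; apply: eq_bigr => a _; rewrite big_mkord.
  by apply: eq_bigr.
case: (eqVneq t 1) => [->|t1] /=.
  rewrite mul0n addn0 mul1n.
  rewrite (eq_bigr (fun a => (a == cc) * (B - cc) + (cc < a) * 1)); last first.
    move=> a _; rewrite /Gn /=.
    rewrite (eq_bigr (fun b => (a == cc) * (cc <= b) + (cc < a) * (b == cc))); last first.
      by move=> b _; lia.
    rewrite big_split /= -!big_distrr /= sumS1 sumS2; lia.
  rewrite big_split /= sum_eqa // -big_distrl /=.
  rewrite (eq_bigr (fun a => (cc.+1 <= a : nat))) // sumS1; lia.
case: (eqVneq t 2) => [->|t2] /=.
  rewrite mul0n addn0 mul1n.
  rewrite (eq_bigr (fun a => (a == cc) * (B - (K.-1 - cc)) + (a < cc) * 1)); last first.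
    move=> a _; rewrite /Gn /=.
    rewrite (eq_bigr (fun b => (a == cc) * (K.-1 - cc <= b) + (a < cc) * (b == K.-1 - cc))); last first.
      by move=> b _; lia.
    rewrite big_split /= -!big_distrr /= sumS1 sumS2; lia.
  rewrite big_split /= sum_eqa // -big_distrl /=.
  rewrite sumS4; lia.
rewrite !mul0n !addn0.
rewrite (eq_bigr (fun a => (a == cc) * B)); last first.
  move=> a _; rewrite /Gn (negbTE t1) (negbTE t2).
  rewrite (eq_bigr (fun b => (a == cc : nat))) // sum_const_nat; lia.
by rewrite sum_eqa.
Qed.

Definition nfib K B t cc := \sum_(d : 'I_K * 'I_B) (@gcol K B t d == cc : nat).

Lemma wsum_id (I : finType) K B (P : pred I) (ta : I -> nat) cc :
  0 < K -> K <= B -> cc < K ->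
  \sum_i (P i : nat) * nfib K B (ta i) cc
    + 2 * cc * \sum_i (P i : nat) * (ta i == 1)
    + K.-1 * \sum_i (P i : nat) * (ta i == 2)
  = B * \sum_i (P i : nat) + K.-1 * \sum_i (P i : nat) * (ta i == 1)
    + 2 * cc * \sum_i (P i : nat) * (ta i == 2).
Proof.
move=> K0 KB cK; rewrite !big_distrr -!big_split; apply: eq_bigr => i _ /=.
have := nfib_id (ta i) K0 KB cK; rewrite -/(nfib K B (ta i) cc).
case: (P i); rewrite ?mul1n ?mul0n ?muln0 //.
by case: (ta i == 1); case: (ta i == 2); rewrite /= ?mul1n ?mul0n ?muln1 ?muln0; lia.
Qed.

Lemma gcol_lt K B t (d : 'I_K * 'I_B) : 0 < K -> @gcol K B t d < K.
Proof.
move=> K0; rewrite /gcol; case: d => [a b] /=.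
have := ltn_ord a; case: (t == 1); case: (t == 2); lia.
Qed.

Section Main.
Variables (T : finType) (e : rel T) (c : T -> T -> nat) (q K B : nat) (a D : nat -> nat).
Hypotheses (esym : symmetric e) (eirr : irreflexive e)
  (csym : forall x y, e x y -> c x y = c y x)
  (crng : forall x y, e x y -> 1 <= c x y <= q)
  (hdeg : forall f j, 1 <= j <= q -> degj e c j f = a j)
  (hD : forall f j, 1 <= j <= q -> ej e c j f = D j)
  (hnb : forall f, #|[set u | e f u]| = \sum_(1 <= j < q.+1) a j)
  (K0 : 0 < K) (KB : K <= B) (q2 : 1 < q).

Local Notation Dl := ('I_K * 'I_B)%type.
Local Notation Hc := {ffun Dl -> bool}.
Local Notation EG := (@Eg T e K B).
Local Notation CG := (@Cg T c q K B).

Definition dF := \sum_(1 <= j < q.+1) a j.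
Definition PP := 1 + dF + \sum_(1 <= j < q.+1) 2 * D j.

Lemma degF_high f j : q < j -> degj e c j f = 0.
Proof.
move=> qj; rewrite /degj card_sumE big1 // => x _.
by case E: (e f x) => //=; have := crng E; case: eqVneq => // ->; lia.
Qed.

Lemma Qc_low f j : 1 <= j <= q -> Qc e c j f = 2 * D j.
Proof. by move=> hj; rewrite /Qc -ej_pairs // hD. Qed.

Lemma Qc_high f j : q < j -> Qc e c j f = 0.
Proof.
move=> qj; rewrite /Qc big1 // => p _.
by case E: (e p.1 p.2); rewrite ?andbF ?andbT //=; have := crng E; case: (c p.1 p.2 == j) /eqP; rewrite ?andbF // => ->; lia.
Qed.

Lemma Nf_card f : \sum_x ((x == f) || e f x : nat) = 1 + dF.
Proof.
rewrite -card_sumE /dF -(hnb f).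
have -> : [set x | (x == f) || e f x] = f |: [set u | e f u].
  by apply/setP => x; rewrite !inE.
by rewrite cardsU1 inE eirr.
Qed.

Lemma Nf_tau f t : 1 <= t ->
  \sum_x ((x == f) || e f x : nat) * (tau c f x == t) = degj e c t f.
Proof.
move=> t1; rewrite /degj card_sumE; apply: eq_bigr => x _.
rewrite /tau eq_sym; case: eqVneq => [->|nx] /=; first by rewrite eirr; lia.
by case: (e f x); case: (c f x == t).
Qed.

Lemma pairs_tau f t : 1 <= t ->
  \sum_(p : T * T) ((p.1 \in cnbhd e f) && (p.2 \in cnbhd e f)
      && ((p.1 == p.2) || e p.1 p.2) : nat) * (tau c p.1 p.2 == t) = Qc e c t f.
Proof.
move=> t1; apply: eq_bigr => p _.
rewrite /tau; case: eqVneq => [->|nx] /=; first by rewrite eirr !andbF; lia.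
by case: (_ && _); case: (e _ _); case: (c _ _ == t).
Qed.

Lemma pairs_all f :
  \sum_(p : T * T) ((p.1 \in cnbhd e f) && (p.2 \in cnbhd e f)
      && ((p.1 == p.2) || e p.1 p.2) : nat) = PP.
Proof.
rewrite (eq_bigr (fun p : T * T =>
   ((p.1 \in cnbhd e f) && (p.2 \in cnbhd e f) && (p.1 == p.2) : nat)
   + ((p.1 \in cnbhd e f) && (p.2 \in cnbhd e f) && e p.1 p.2 : nat))); last first.
  move=> [x y] _ /=; case: eqVneq => [->|] /=; first by rewrite eirr; lia.
  by move=> _; rewrite andbF.
rewrite big_split /=.
rewrite [X in _ + X](sum_partition (col := fun p : T * T => c p.1 p.2) (n := q)); last first.
  by move=> p /andP [_ H]; apply: crng.
rewrite (eq_big_nat _ _ (F2 := fun j => 2 * D j)); last first.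
  by move=> j hj; rewrite -(Qc_low f hj).
rewrite /PP -(Nf_card f) sum_pair; congr (_ + _).
apply: eq_bigr => x _ /=.
rewrite (bigD1 x) //= eqxx andbT big1 ?addn0.
  by rewrite /cnbhd inE andbb.
by move=> y /negbTE; rewrite eq_sym => ->; rewrite andbF.
Qed.


Lemma degG_low f (h : Hc) j : 1 <= j <= q -> degj EG CG j (f, h) = a j.
Proof.
move=> hj; rewrite degj_Eg hdeg // big1 ?addn0 // => d _; apply: big1 => x _.
by case: eqVneq => //; lia.
Qed.

Lemma degG_high f (h : Hc) cc : cc < K ->
  degj EG CG (q.+1 + cc) (f, h) + 2 * cc * a 1 + K.-1 * a 2
  = B * (1 + dF) + K.-1 * a 1 + 2 * cc * a 2.
Proof.
move=> cK; rewrite degj_Eg degF_high ?add0n; last lia.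
rewrite exchange_big /=.
rewrite (eq_bigr (fun x => ((x == f) || e f x : nat) * nfib K B (tau c f x) cc)); last first.
  move=> x _; rewrite /nfib big_distrr /=; apply: eq_bigr => d _.
  by rewrite eqn_add2l; case: (_ || _); case: (_ == _).
have := wsum_id (fun x => (x == f) || e f x) (tau c f) K0 KB cK.
rewrite !Nf_tau // !hdeg ?q2 //; last lia.
move=> ->; congr (_ + _ + _); congr (B * _); exact: Nf_card.
Qed.

Lemma ejG_low f (h : Hc) j : 1 <= j <= q -> ej EG CG j (f, h) = (K * B).+1 * D j.
Proof.
move=> hj; have := ej_Eg q esym eirr csym j f h.
rewrite Qc_low // big1; last first.
  move=> d _; apply: big1 => p _; case: eqVneq; rewrite ?andbF //; lia.
rewrite card_prod !card_ord; lia.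
Qed.

Lemma ejG_high f (h : Hc) cc : cc < K ->
  ej EG CG (q.+1 + cc) (f, h) + 2 * cc * (2 * D 1) + K.-1 * (2 * D 2)
  = B * PP + K.-1 * (2 * D 1) + 2 * cc * (2 * D 2).
Proof.
move=> cK; have := ej_Eg q esym eirr csym (q.+1 + cc) f h.
rewrite Qc_high ?muln0 ?add0n; last lia.
move=> /eqP; rewrite eqn_pmul2l // => /eqP ->.
rewrite /Xd exchange_big /=.
rewrite (eq_bigr (fun p : T * T => ((p.1 \in cnbhd e f) && (p.2 \in cnbhd e f)
      && ((p.1 == p.2) || e p.1 p.2) : nat) * nfib K B (tau c p.1 p.2) cc)); last first.
  move=> p _; rewrite /nfib big_distrr /=; apply: eq_bigr => d _.
  by rewrite eqn_add2l; case: (gcol _ _ == cc); rewrite ?andbT ?andbF ?muln1 ?muln0.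
have := wsum_id (fun p : T * T => (p.1 \in cnbhd e f) && (p.2 \in cnbhd e f)
      && ((p.1 == p.2) || e p.1 p.2)) (fun p => tau c p.1 p.2) K0 KB cK.
by rewrite !pairs_tau // !Qc_low ?pairs_all //; lia.
Qed.

Lemma deg_le_Qc f j : 2 * degj e c j f <= Qc e c j f.
Proof.
have E1 : \sum_(p : T * T) ((p.1 == f) && (e f p.2 && (c f p.2 == j)) : nat) = degj e c j f.
  rewrite /degj card_sumE sum_pair (bigD1 f) //= [X in _ + X]big1 ?addn0.
    by apply: eq_bigr => y _; rewrite eqxx.
  by move=> x /negbTE xf; apply: big1 => y _; rewrite xf.
have E2 : \sum_(p : T * T) ((p.2 == f) && (e f p.1 && (c f p.1 == j)) : nat) = degj e c j f.
  rewrite /degj card_sumE sum_pair exchange_big /= (bigD1 f) //= [X in _ + X]big1 ?addn0.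
    by apply: eq_bigr => y _; rewrite eqxx.
  by move=> x /negbTE xf; apply: big1 => y _; rewrite xf.
rewrite mul2n -addnn -{1}E1 -E2 -big_split /=; apply: leq_sum => [[x y]] _ /=.
rewrite /cnbhd !inE.
case: (eqVneq x f) => [->|xf]; case: (eqVneq y f) => [->|yf] /=; rewrite ?eirr //=.
- by case: (e f y) => //=; case: (c f y == j).
- rewrite (esym x f); case E: (e f x) => //=.
  have E' : e x f by rewrite esym.
  rewrite (csym E').
  by case: (c f x == j).
Qed.

End Main.

Lemma key_ineq q k (a D : nat -> nat) :
  1 < q -> 4 * q < k ->
  1 + (\max_(1 <= j < q) (D j - D j.+1)) * q * (q - 1) + 5 * 'C(k - q, 2)
    < D q * (k - 4 * q) ->
  (forall j, 1 <= j < q -> a j < a j.+1) ->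
  (forall j, 1 <= j < q -> D j.+1 < D j) ->
  a q <= D q -> PP q a D < (k - q) * D q.
Proof.
move=> q1 qk hineq amon Dmon aD.
set xi := \max_(1 <= j < q) (D j - D j.+1).
have hx : forall j, 1 <= j < q -> D j <= D j.+1 + xi.
  move=> j hj; have : D j - D j.+1 <= xi.
    by apply: (@leq_bigmax_seq _ (index_iota 1 q) xpredT (fun j => D j - D j.+1) j) => //; rewrite mem_index_iota.
  lia.
have am : forall n, n < q -> a (q - n) <= a q.
  elim=> [|n IH] hn; first by rewrite subn0.
  have := amon (q - n.+1); have -> : (q - n.+1).+1 = q - n by lia.
  have := IH (ltnW hn); lia.
have hdF : dF q a <= q * a q.
  rewrite /dF big_nat_cond.
  apply: (@leq_trans (\sum_(1 <= j < q.+1 | (1 <= j < q.+1) && true) a q)).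
    apply: leq_sum => j /andP [hj _].
    have := am (q - j); have -> : q - (q - j) = j by lia.
    move=> H; apply: H; lia.
  rewrite -big_nat_cond sum_nat_const_nat; lia.
have hS : forall n, n < q -> D (q - n) <= D q + n * xi /\
    2 * \sum_(q - n <= j < q.+1) D j <= 2 * n.+1 * D q + xi * n * n.+1.
  elim=> [|n IH] hn.
    by rewrite subn0 big_nat1; lia.
  have [IH1 IH2] := IH (ltnW hn).
  have h1 := hx (q - n.+1); rewrite (_ : (q - n.+1).+1 = q - n) in h1; last by lia.
  have h2 : D (q - n.+1) <= D q + n.+1 * xi by have := h1 ltac:(lia); lia.
  split => //.
  rewrite (big_ltn (m := q - n.+1)); last by lia.
  have -> : (q - n.+1).+1 = q - n by lia.
  nia.
have [_ hS2] := hS q.-1 ltac:(lia).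
rewrite (_ : q - q.-1 = 1) in hS2; last by lia.
rewrite /PP -big_distrr /=.
have E1 : (k - q) * D q = D q * (k - 4 * q) + 3 * (q * D q).
  have -> : k - q = (k - 4 * q) + 3 * q by lia.
  nia.
rewrite E1.
have E2 : xi * q.-1 * q.-1.+1 = xi * q * (q - 1).
  have -> : q.-1.+1 = q by lia.
  have -> : q.-1 = q - 1 by lia.
  nia.
nia.
Qed.
Unset Implicit Arguments.

Theorem lemma4p4 (q k : nat) (a D : nat -> nat) :
  1 < q -> 4 * q < k ->
  1 + (\max_(1 <= j < q) (D j - D j.+1)) * q * (q - 1) + 5 * 'C(k - q, 2)
    < D q * (k - 4 * q) ->
  (exists (T : finType) (e : rel T) (c : T -> T -> nat),
      flip_graph_with e q a c /\
      (forall v j, 1 <= j <= q -> ej e c j v = D j)) ->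
  forall N : nat,
    exists a' : nat -> nat,
      [/\ forall j, 1 <= j <= q -> a' j = a j,
          N < a' k
        & exists (T : finType) (e : rel T), flip_graph e k a'].
Proof.
move=> hq hk hineq [T [e [c [[[apos amon] [esym eirr] Tpos hnb [hcs hdeg heflip]] HD]]]] N.
have csym : forall x y, e x y -> c x y = c y x by move=> x y /hcs [].
have crng : forall x y, e x y -> 1 <= c x y <= q by move=> x y /hcs [].
have [f0 _] := card_gt0P Tpos.
have a12 : a 1 < a 2 by apply: amon; lia.
have Dmon : forall j, 1 <= j < q -> D j.+1 < D j.
  by move=> j hj; have := heflip f0 j hj; rewrite !HD //; lia.
have D21 : D 2 < D 1 by apply: Dmon; lia.
have aqDq : a q <= D q.
  have := deg_le_Qc esym eirr csym f0 q.
  rewrite hdeg ?(Qc_low esym eirr csym HD) //; lia.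
have key := key_ineq hq hk hineq amon Dmon aqDq.
set K := k - q.
set B := K + 2 * K * D 1 + K * a 2 + a q + N.+1.
have K0 : 0 < K by rewrite /K; lia.
have KB : K <= B by rewrite /B; lia.
set DH := fun cc => B * (1 + dF q a) + K.-1 * a 1 + 2 * cc * a 2 - (2 * cc * a 1 + K.-1 * a 2).
set EH := fun cc => B * PP q a D + K.-1 * (2 * D 1) + 2 * cc * (2 * D 2)
                    - (2 * cc * (2 * D 1) + K.-1 * (2 * D 2)).
pose h0 : {ffun 'I_K * 'I_B -> bool} := [ffun _ => false].
have idDH : forall cc, cc < K -> DH cc + 2 * cc * a 1 + K.-1 * a 2
     = B * (1 + dF q a) + K.-1 * a 1 + 2 * cc * a 2.
  move=> cc cK; have := degG_high eirr crng hdeg hnb K0 KB hq f0 h0 cK.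
  rewrite /DH; lia.
have idEH : forall cc, cc < K -> EH cc + 2 * cc * (2 * D 1) + K.-1 * (2 * D 2)
     = B * PP q a D + K.-1 * (2 * D 1) + 2 * cc * (2 * D 2).
  move=> cc cK; have := ejG_high esym eirr csym crng HD hnb K0 KB hq f0 h0 cK.
  rewrite /EH; lia.
have degH : forall f (h : {ffun 'I_K * 'I_B -> bool}) cc, cc < K ->
    degj (@Eg T e K B) (@Cg T c q K B) (q.+1 + cc) (f, h) = DH cc.
  move=> f h cc cK; have := degG_high eirr crng hdeg hnb K0 KB hq f h cK.
  have := idDH cc cK; lia.
have ejH : forall f (h : {ffun 'I_K * 'I_B -> bool}) cc, cc < K ->
    ej (@Eg T e K B) (@Cg T c q K B) (q.+1 + cc) (f, h) = EH cc.
  move=> f h cc cK; have := ejG_high esym eirr csym crng HD hnb K0 KB hq f h cK.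
  have := idEH cc cK; lia.
have DH0 : a q < DH 0 /\ N < DH 0.
  have := idDH 0 K0; rewrite /B; nia.
have DHmon : forall cc, cc.+1 < K -> DH cc < DH cc.+1.
  move=> cc cK; have := idDH cc (ltnW cK); have := idDH cc.+1 cK; nia.
have DHge : forall cc, cc < K -> DH 0 <= DH cc.
  elim=> [|cc IH] cK //; have := DHmon cc cK; have := IH (ltnW cK); lia.
have EHmon : forall cc, cc.+1 < K -> EH cc.+1 < EH cc.
  move=> cc cK; have := idEH cc (ltnW cK); have := idEH cc.+1 cK; nia.
have EH0 : EH 0 < (K * B).+1 * D q.
  have := idEH 0 K0.
  have h1 : B * PP q a D + B <= B * (K * D q) by rewrite -mulnSr leq_mul2l key orbT.
  have h2 : B * (K * D q) <= (K * B).+1 * D q by nia.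
  have h3 : 2 * K * D 1 < B by rewrite /B; lia.
  nia.
have qK : q + K = k by rewrite /K; lia.
pose a' := fun j => if j <= q then a j else DH (j - q.+1).
have degall : forall f (h : {ffun 'I_K * 'I_B -> bool}) j, 1 <= j <= k ->
    degj (@Eg T e K B) (@Cg T c q K B) j (f, h) = a' j.
  move=> f h j hj; rewrite /a'; case: leqP => jq.
    by rewrite (degG_low hdeg K0 KB hq) //; lia.
  have -> : j = q.+1 + (j - q.+1) by lia.
  rewrite degH; last by lia.
  by congr DH; lia.
exists a'; split.
- by move=> j hj; rewrite /a' (_ : j <= q = true) //; lia.
- rewrite /a' (_ : k <= q = false); last by lia.
  have := DHge (k - q.+1) ltac:(lia); case: DH0 => _; lia.
exists (T * {ffun 'I_K * 'I_B -> bool})%type, (@Eg T e K B), (@Cg T c q K B).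
split.
- split.
    move=> j hj; rewrite /a'; case: (leqP j q) => jq; first by (have := apos j); lia.
    have := DHge (j - q.+1) ltac:(lia); case: DH0 => _; lia.
  move=> j hj; rewrite /a'; case: (leqP j q) => jq.
    case: (leqP j.+1 q) => jq'; first by apply: amon; lia.
    have -> : j = q by lia.
    by rewrite subnn; case: DH0.
  rewrite (_ : j.+1 <= q = false); last by lia.
  have -> : j.+1 - q.+1 = (j - q.+1).+1 by lia.
  apply: DHmon; lia.
- by split; [exact: Eg_sym | exact: Eg_irr].
- apply/card_gt0P; by exists (f0, h0).
- move=> [f h]; rewrite card_sumE.
  rewrite (sum_partition (col := @Cg T c q K B (f, h)) (n := k)); last first.
    by move=> u; rewrite -qK; apply: Cg_rng.
  apply: eq_big_nat => j hj; rewrite -card_sumE; exact: degall.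
- split.
  + move=> u w Euw; split; first exact: (Cg_sym q csym Euw).
    rewrite -qK; exact: (Cg_rng crng K0 Euw).
  + move=> [f h] j hj; exact: degall.
  + move=> [f h] j hj.
    case: (ltnP j q) => jq.
      rewrite !(ejG_low esym eirr csym HD K0 KB hq) //; try lia.
      by rewrite ltn_mul2l /= Dmon //; lia.
    case: (eqVneq j q) => [->|njq].
      rewrite (ejG_low esym eirr csym HD K0 KB hq f h (j:=q)); last by lia.
      by rewrite -[q.+1]addn0 ejH.
    have -> : j = q.+1 + (j - q.+1) by lia.
    rewrite -addnS !ejH; try lia.
    apply: EHmon; lia.
Qed.
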